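(* Let $B,D\in\mathrm{Mat}_{m\times m}(\mathbb{R})$ and let $f\in C^\infty(\mathbb{R}^m)$ with $f(u)\neq 0$ for all $u$. Set $\mathbf{B}(u)=f(u)B$ and $\mathbf{D}(u)=f(u)D$, and let $L_{(\mathbf{B},\mathbf{D}^t)}\subset T\mathbb{R}^m\oplus T^*\mathbb{R}^m$ be the subbundle with fibre $L_{(\mathbf{B},\mathbf{D}^t)}(u)=\{(\mathbf{B}(u)z,\mathbf{D}^t(u)z): z\in\mathbb{R}^m\}$ at each $u\in\mathbb{R}^m$. Then $L_{(\mathbf{B},\mathbf{D}^t)}$ is a big-isotropic structure if and only if $DB+B^tD^t=0$, and it is a Dirac structure if and only if $DB+B^tD^t=0$ and $\ker B\cap\ker D^t=\{0\}$.
   Context: For a manifold $M$, $\mathbb{T}M=TM\oplus T^*M$ carries the pairing $\langle\langle (X,\alpha),(Y,\beta)\rangle\rangle=\frac12(\beta(X)+\alpha(Y))$. For a linear subbundle $L$, $L^\perp=\{(X,\alpha): \langle\langle (X,\alpha),(Y,\beta)\rangle\rangle=0\ \forall (Y,\beta)\in L\}$; $L$ is isotropic if $L\subseteq L^\perp$ and maximal isotropic if $L=L^\perp$. The Courant bracket of sections is $[(X,\alpha),(Y,\beta)]=\big([X,Y],\ \mathcal{L}_X\beta-\mathcal{L}_Y\alpha+\frac12 d(\alpha(Y)-\beta(X))\big)$. A big-isotropic structure is an isotropic linear subbundle whose space of sections is closed under the Courant bracket; a Dirac structure is a maximal isotropic linear subbundle whose sections are closed under the Courant bracket. Vectors and covectors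 on $\mathbb{R}^m$ are identified with column vectors in $\mathbb{R}^m$ via the canonical basis. *)

(* Defs.v *)
From HB Require Import structures.
From mathcomp Require Import all_boot all_order all_algebra.
From mathcomp Require Import all_classical all_reals all_analysis.
Set Implicit Arguments. Unset Strict Implicit. Unset Printing Implicit Defensive.
Import Order.TTheory GRing.Theory Num.Theory.
Import numFieldNormedType.Exports.
Local Open Scope ring_scope.
Local Open Scope classical_set_scope.

(* Points, vectors and covectors of R^m are column vectors 'cV[R]_m. *)

Fixpoint iterD {R : realType} {V W : normedModType R}
    (vs : seq V) (f : V -> W) : V -> W :=
  match vs with
  | [::] => f
  | v :: vs' => fun x => derive (iterD vs' f) x v
  end.

Definition smooth {R : realType} {V W : normedModType R} (f : V -> W) : Prop :=
  forall vs : seq V, continuous (iterD vs f) /\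
    forall (x v : V), derivable (iterD vs f) x v.

Section Courant.
Variables (R : realType) (m : nat).
Notation vec := 'cV[R]_m.

Definition evec (j : 'I_m) : vec := delta_mx j 0.

(* alpha(X) for a covector alpha and vector X *)
Definition dotv (a X : vec) : R := \sum_(i < m) a i 0 * X i 0.

Definition pairingT (p q : vec * vec) : R :=
  (dotv q.2 p.1 + dotv p.2 q.1) / 2%:R.

Definition lieb (X Y : vec -> vec) (u : vec) : vec :=
  derive Y u (X u) - derive X u (Y u).

Definition dfun (g : vec -> R) (u : vec) : vec :=
  \col_(j < m) derive g u (evec j).

Definition lieD (X b : vec -> vec) (u : vec) : vec :=
  derive b u (X u) + \col_(j < m) dotv (b u) (derive X u (evec j)).

Definition courant (X a Y b : vec -> vec) : (vec -> vec) * (vec -> vec) :=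
  (lieb X Y,
   fun u => lieD X b u - lieD Y a u
            + 2%:R^-1 *: dfun (fun w => dotv (a w) (Y w) - dotv (b w) (X w)) u).

Definition fibres := vec -> set (vec * vec).

Definition perp (S : set (vec * vec)) : set (vec * vec) :=
  [set p | forall q, S q -> pairingT p q = 0].

Definition section (L : fibres) (X a : vec -> vec) : Prop :=
  smooth X /\ smooth a /\ forall u, L u (X u, a u).

Definition courant_closed (L : fibres) : Prop :=
  forall X a Y b, section L X a -> section L Y b ->
    forall u, L u (((courant X a Y b).1 u), ((courant X a Y b).2 u)).

Definition big_isotropic_structure (L : fibres) : Prop :=
  (forall u, L u `<=` perp (L u)) /\ courant_closed L.

Definition dirac_structure (L : fibres) : Prop :=
  (forall u, L u = perp (L u)) /\ courant_closed L.

Definition LBD (f : vec -> R) (B D : 'M[R]_m) : fibres :=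
  fun u => [set p | exists z : vec,
    p = (f u *: (B *m z), f u *: (D^T *m z))].

End Courant.

(* Main.v *)
Require Import Defs.
From HB Require Import structures.
From mathcomp Require Import all_boot all_order all_algebra.
From mathcomp Require Import all_classical all_reals all_analysis.
From mathcomp Require Import zify ring lra.
Import Order.TTheory GRing.Theory Num.Theory.
Local Open Scope ring_scope.

Lemma derivable_entry (R : realType) (V : normedModType R) p q
  (F : V -> 'M[R]_(p, q)) t v i j :
  derivable F t v -> derivable (fun x => F x i j) t v.
Proof. by move/derivable_mxP. Qed.

Lemma derive_entry (R : realType) (V : normedModType R) p q
  (F : V -> 'M[R]_(p, q)) t v i j :
  derivable F t v -> derive (fun x => F x i j) t v = derive F t v i j.
Proof. by move=> dF; rewrite derive_mx // mxE. Qed.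

Lemma derivable_mulmx (R : realType) (V : normedModType R) p q n
  (A : 'M[R]_(p, q)) (F : V -> 'M[R]_(q, n)) t v :
  derivable F t v -> derivable (fun x => A *m F x) t v.
Proof.
move=> dF; apply/derivable_mxP => i j.
have -> : (fun x => (A *m F x) i j) = \sum_(k < q) (fun x => A i k * F x k j).
  by apply/funext => x; rewrite mxE fct_sumE.
apply: derivable_sum => k.
have -> : (fun x => A i k * F x k j) = (A i k) \*o (fun x => F x k j) by [].
by apply: derivableM; [exact: derivable_cst | exact: derivable_entry].
Qed.

Lemma derive_mulmx (R : realType) (V : normedModType R) p q n
  (A : 'M[R]_(p, q)) (F : V -> 'M[R]_(q, n)) t v :
  derivable F t v -> derive (fun x => A *m F x) t v = A *m derive F t v.
Proof.
move=> dF; rewrite derive_mx; last exact: derivable_mulmx.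
apply/matrixP => i j; rewrite !mxE.
have -> : (fun x => (A *m F x) i j) = \sum_(k < q) (fun x => A i k * F x k j).
  by apply/funext => x; rewrite mxE fct_sumE.
rewrite derive_sum; last first.
  move=> k; have -> : (fun x => A i k * F x k j) = (A i k) \*o (fun x => F x k j) by [].
  by apply: derivableM; [exact: derivable_cst | exact: derivable_entry].
apply: eq_bigr => k _.
have -> : (fun x => A i k * F x k j) = (A i k) \*o (fun x => F x k j) by [].
by rewrite deriveMl ?derive_entry //; exact: derivable_entry.
Qed.

Lemma derivable_dotv (R : realType) (m : nat) (F G : 'cV[R]_m -> 'cV[R]_m) t v :
  derivable F t v -> derivable G t v -> derivable (fun x => dotv (F x) (G x)) t v.
Proof.
move=> dF dG; rewrite /dotv.
have -> : (fun x => \sum_(i < m) F x i 0 * G x i 0) = \sum_(i < m) (fun x => F x i 0 * G x i 0).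
  by apply/funext => x; rewrite fct_sumE.
apply: derivable_sum => k.
have -> : (fun x => F x k 0 * G x k 0) = (fun x => F x k 0) * (fun x => G x k 0) by [].
by apply: derivableM; exact: derivable_entry.
Qed.

Lemma derive_dotv (R : realType) (m : nat) (F G : 'cV[R]_m -> 'cV[R]_m) t v :
  derivable F t v -> derivable G t v ->
  derive (fun x => dotv (F x) (G x)) t v =
  dotv (derive F t v) (G t) + dotv (F t) (derive G t v).
Proof.
move=> dF dG; rewrite /dotv.
have -> : (fun x => \sum_(i < m) F x i 0 * G x i 0) = \sum_(i < m) (fun x => F x i 0 * G x i 0).
  by apply/funext => x; rewrite fct_sumE.
rewrite derive_sum; last first.
  move=> k.
  have -> : (fun x => F x k 0 * G x k 0) = (fun x => F x k 0) * (fun x => G x k 0) by [].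
  by apply: derivableM; exact: derivable_entry.
rewrite -big_split /=; apply: eq_bigr => k _.
have -> : (fun x => F x k 0 * G x k 0) = (fun x => F x k 0) * (fun x => G x k 0) by [].
rewrite deriveM; try exact: derivable_entry.
rewrite !derive_entry // /GRing.scale /=.
by rewrite addrC mulrC [G t k 0 * _]mulrC.
Qed.
Local Open Scope ring_scope.

Lemma dotvE (R : realType) (m : nat) (a X : 'cV[R]_m) : dotv a X = (a^T *m X) 0 0.
Proof. by rewrite /dotv mxE; apply: eq_bigr => i _; rewrite mxE. Qed.


Lemma delta_entry (R : realType) (m : nat) (M : 'M[R]_m) i j :
  ((delta_mx i 0 : 'cV[R]_m)^T *m M *m (delta_mx j 0 : 'cV[R]_m)) 0 0 = M i j.
Proof. by rewrite trmx_delta -rowE -colE !mxE. Qed.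

Lemma dotvZ (R : realType) (m : nat) (c d : R) (a X : 'cV[R]_m) :
  dotv (c *: a) (d *: X) = c * d * dotv a X.
Proof.
rewrite /dotv mulr_sumr; apply: eq_bigr => i _; rewrite !mxE.
by rewrite mulrACA.
Qed.
Lemma omega_sym (R : realType) (m : nat) (B D : 'M[R]_m) (x y : 'cV[R]_m) :
  dotv (D^T *m x) (B *m y) + dotv (D^T *m y) (B *m x) =
  (x^T *m (D *m B + B^T *m D^T) *m y) 0 0.
Proof.
rewrite !dotvE !trmx_mul !trmxK.
have E : forall A : 'M[R]_1, A 0 0 = A^T 0 0 by move=> A; rewrite mxE.
by rewrite [X in _ + X = _]E !trmx_mul !trmxK mulmxDr mulmxDl !mulmxA [RHS]mxE.
Qed.

Lemma pairing_LL (R : realType) (m : nat) (B D : 'M[R]_m) (c : R) (z w : 'cV[R]_m) :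
  pairingT (c *: (B *m z), c *: (D^T *m z)) (c *: (B *m w), c *: (D^T *m w)) =
  c * c * (z^T *m (D *m B + B^T *m D^T) *m w) 0 0 / 2%:R.
Proof. rewrite /pairingT /= !dotvZ -mulrDr addrC omega_sym.
by []. Qed.

Lemma pairing_perp (R : realType) (m : nat) (B D : 'M[R]_m) (c : R) (x al z : 'cV[R]_m) :
  pairingT (x, al) (c *: (B *m z), c *: (D^T *m z)) =
  c * (z^T *m (D *m x + B^T *m al)) 0 0 / 2%:R.
Proof.
rewrite /pairingT /=.
have -> : dotv (c *: (D^T *m z)) x = c * dotv (D^T *m z) x.
  by rewrite -[x in LHS]scale1r dotvZ mulr1.
have -> : dotv al (c *: (B *m z)) = c * dotv al (B *m z).
  by rewrite -[al in LHS]scale1r dotvZ mul1r.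
rewrite -mulrDr !dotvE; congr (_ * _ / _).
have E : forall A : 'M[R]_1, A 0 0 = A^T 0 0 by move=> A; rewrite mxE.
rewrite [X in _ + X = _]E !trmx_mul !trmxK.
by rewrite mulmxDr [RHS]mxE !mulmxA.
Qed.

Lemma iso_fwd (R : realType) (m : nat) (B D : 'M[R]_m) (f : 'cV[R]_m -> R)
  (hf0 : forall u, f u != 0) :
  (forall u, (LBD f B D u `<=` perp (LBD f B D u))%classic) -> D *m B + B^T *m D^T = 0.
Proof.
move=> iso; apply/matrixP => i j.
set u : 'cV[R]_m := 0.
have := iso u (f u *: (B *m delta_mx i 0), f u *: (D^T *m delta_mx i 0)).
move=> /(_ (ex_intro _ _ erefl)) /(_ (f u *: (B *m delta_mx j 0), f u *: (D^T *m delta_mx j 0))).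
move=> /(_ (ex_intro _ _ erefl)).
rewrite pairing_LL delta_entry => /eqP.
rewrite !mulf_eq0 invr_eq0 pnatr_eq0 /= (negbTE (hf0 u)) /= orbF => /eqP ->; by rewrite mxE.

Qed.

Lemma iso_bwd (R : realType) (m : nat) (B D : 'M[R]_m) (f : 'cV[R]_m -> R) :
  D *m B + B^T *m D^T = 0 -> forall u, (LBD f B D u `<=` perp (LBD f B D u))%classic.
Proof.
move=> hC u p [z ->] q [w ->].
by rewrite pairing_LL hC mulmx0 mul0mx mxE mulr0 mul0r.
Qed.

Lemma rowZ_L (R : realType) (m : nat) (B D : 'M[R]_m) (c : R) (z : 'cV[R]_m) :
  row_mx (c *: (B *m z))^T (c *: (D^T *m z))^T = (c *: z^T) *m row_mx B^T D.
Proof. by rewrite mul_mx_row -!scalemxAl !linearZ /= !trmx_mul trmxK. Qed.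

Lemma L_row (R : realType) (m : nat) (B D : 'M[R]_m) (f : 'cV[R]_m -> R) u
  (hu : f u != 0) (x al : 'cV[R]_m) :
  LBD f B D u (x, al) <-> (row_mx x^T al^T <= row_mx B^T D)%MS.
Proof.
split.
  by move=> [z [-> ->]]; apply/submxP; exists (f u *: z^T); rewrite rowZ_L.
move=> /submxP [w E]; exists ((f u)^-1 *: w^T).
rewrite -!scalemxAr !scalerA mulfV // !scale1r.
move: E; rewrite mul_mx_row => /eq_row_mx [E1 E2].
by rewrite -[x]trmxK -[al]trmxK E1 E2 !trmx_mul !trmxK.
Qed.

Lemma perp_row (R : realType) (m : nat) (B D : 'M[R]_m) (f : 'cV[R]_m -> R) u
  (hu : f u != 0) (x al : 'cV[R]_m) :
  perp (LBD f B D u) (x, al) <-> D *m x + B^T *m al = 0.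
Proof.
split; last first.
  by move=> h q [z ->]; rewrite pairing_perp h mulmx0 mxE mulr0 mul0r.
move=> h; apply/matrixP => i j; rewrite (ord1 j).
have := h _ (ex_intro _ (delta_mx i 0) erefl).
rewrite pairing_perp => /eqP; rewrite !mulf_eq0 invr_eq0 pnatr_eq0 /= (negbTE hu) /= orbF.
by rewrite trmx_delta -rowE !mxE => /eqP.
Qed.

Lemma rank_MN (R : realType) (m : nat) (B D : 'M[R]_m) :
  \rank (col_mx D^T B) = \rank (row_mx B^T D).
Proof. by rewrite -[\rank (row_mx _ _)]mxrank_tr tr_row_mx trmxK -!addsmxE addsmxC. Qed.

Lemma NrE (R : realType) (m : nat) (B D : 'M[R]_m) (x al : 'cV[R]_m) :
  row_mx x^T al^T *m col_mx D^T B = (D *m x + B^T *m al)^T.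
Proof. by rewrite mul_row_col linearD /= !trmx_mul !trmxK. Qed.

Lemma dirac_fwd (R : realType) (m : nat) (B D : 'M[R]_m) (f : 'cV[R]_m -> R)
  (hf0 : forall u, f u != 0) :
  (forall u, LBD f B D u = perp (LBD f B D u)) ->
  (forall z : 'cV[R]_m, B *m z = 0 -> D^T *m z = 0 -> z = 0).
Proof.
move=> eqL.
have sub : (kermx (col_mx D^T B) <= row_mx B^T D)%MS.
  apply/row_subP => i; set r := row i _.
  have hr : r *m col_mx D^T B = 0 by rewrite /r -row_mul mulmx_ker row0.
  have Er : r = row_mx (lsubmx r)^T^T (rsubmx r)^T^T by rewrite !trmxK hsubmxK.
  rewrite Er; apply/(@L_row _ _ _ _ f 0 (hf0 0)); rewrite eqL.
  apply: (proj2 (@perp_row _ _ B D f 0 (hf0 0) _ _)); apply: trmx_inj; rewrite -NrE -Er hr trmx0 //.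
have hr := mxrankS sub; rewrite mxrank_ker rank_MN in hr.
have hle := rank_leq_row (row_mx B^T D).
have hfree : row_free (row_mx B^T D).
  by rewrite /row_free; apply/eqP; lia.
move=> z hB hD; apply: trmx_inj; rewrite trmx0; apply/eqP.
rewrite -(mulmx_free_eq0 _ hfree) mul_mx_row.
by rewrite -[B]trmxK -trmx_mul trmxK -[D in z^T *m D]trmxK -trmx_mul hB hD !trmx0 row_mx0.
Qed.

Lemma dirac_bwd (R : realType) (m : nat) (B D : 'M[R]_m) (f : 'cV[R]_m -> R)
  (hf0 : forall u, f u != 0) :
  D *m B + B^T *m D^T = 0 ->
  (forall z : 'cV[R]_m, B *m z = 0 -> D^T *m z = 0 -> z = 0) ->
  (forall u, LBD f B D u = perp (LBD f B D u)).
Proof.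
move=> hC hinj u.
have hfree : row_free (row_mx B^T D).
  apply: inj_row_free => v; rewrite mul_mx_row => /eqP; rewrite row_mx_eq0.
  case/andP => /eqP h1 /eqP h2.
  rewrite -[v]trmxK (hinj v^T) ?trmx0 //.
    by rewrite -[B]trmxK -trmx_mul h1 trmx0.
  by rewrite -trmx_mul h2 trmx0.
have sMK : (row_mx B^T D <= kermx (col_mx D^T B))%MS.
  by apply/sub_kermxP; rewrite mul_row_col addrC.
have sKM : (kermx (col_mx D^T B) <= row_mx B^T D)%MS.
  rewrite -(mxrank_leqif_sup sMK).2 mxrank_ker rank_MN.
  move: hfree; rewrite /row_free => /eqP ->.
  by rewrite addnK.
rewrite eqEsubset; split; first exact: iso_bwd.
case=> x al /(@perp_row _ _ B D f u (hf0 u)) h; apply/(@L_row _ _ B D f u (hf0 u)).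
apply: submx_trans sKM; apply/sub_kermxP; by rewrite NrE h trmx0.
Qed.

Definition zof (R : realType) (m : nat) (B D : 'M[R]_m) (X a : 'cV[R]_m -> 'cV[R]_m) u :=
  lsubmx ((pinvmx (row_mx B^T D))^T) *m X u + rsubmx ((pinvmx (row_mx B^T D))^T) *m a u.

Arguments zof {R m}.

Lemma derivable_zof (R : realType) (m : nat) (B D : 'M[R]_m) (X a : 'cV[R]_m -> 'cV[R]_m) t v :
  derivable X t v -> derivable a t v -> derivable (zof B D X a) t v.
Proof. by move=> dX da; apply: derivableD; apply: derivable_mulmx. Qed.

Lemma zofE (R : realType) (m : nat) (B D : 'M[R]_m) (f : 'cV[R]_m -> R)
  (hf0 : forall u, f u != 0) (X a : 'cV[R]_m -> 'cV[R]_m)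
  (h : forall u, LBD f B D u (X u, a u)) u :
  B *m zof B D X a u = X u /\ D^T *m zof B D X a u = a u.
Proof.
have s := (@L_row _ _ B D f u (hf0 u) (X u) (a u)).1 (h u).
rewrite /zof; move: (mulmxKpV s); move: (pinvmx (row_mx B^T D)) => P.
move/(congr1 trmx); rewrite !trmx_mul !tr_row_mx !trmxK.
rewrite -{1}[P^T]hsubmxK mul_row_col mul_col_mx => /eq_col_mx [E1 E2].
by rewrite E1 E2.
Qed.

Lemma omega_anti (R : realType) (m : nat) (B D : 'M[R]_m) (x y : 'cV[R]_m) :
  D *m B + B^T *m D^T = 0 ->
  dotv (D^T *m x) (B *m y) = - dotv (D^T *m y) (B *m x).
Proof.
move=> hC; apply/eqP; rewrite -addr_eq0 omega_sym hC mulmx0 mul0mx mxE //.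
Qed.

Lemma rearr (V : zmodType) (A A' C1 C2 S : V) :
  C1 - C2 + S = 0 -> A + C1 - (A' + C2) + S = A - A'.
Proof.
move=> h; by rewrite opprD addrACA -[RHS]addr0 -h !addrA.
Qed.

Lemma closure (R : realType) (m : nat) (B D : 'M[R]_m) (f : 'cV[R]_m -> R)
  (hf0 : forall u, f u != 0) :
  D *m B + B^T *m D^T = 0 -> courant_closed (LBD f B D).
Proof.
move=> hC X a Y b [sX [sa LXa]] [sY [sb LYb]] u.
have dX : forall x v, derivable X x v := (sX [::]).2.
have da : forall x v, derivable a x v := (sa [::]).2.
have dY : forall x v, derivable Y x v := (sY [::]).2.
have db : forall x v, derivable b x v := (sb [::]).2.
have [z [dz [hX ha]]] : exists z, (forall x v, derivable z x v) /\
    X = (fun x => B *m z x) /\ a = (fun x => D^T *m z x).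
  exists (zof B D X a); split; first by move=> x v; apply: derivable_zof.
  by split; apply/funext => x; rewrite ?(@zofE _ _ B D f hf0 X a LXa x).1 ?(@zofE _ _ B D f hf0 X a LXa x).2.
have [w [dw [hY hb]]] : exists z, (forall x v, derivable z x v) /\
    Y = (fun x => B *m z x) /\ b = (fun x => D^T *m z x).
  exists (zof B D Y b); split; first by move=> x v; apply: derivable_zof.
  by split; apply/funext => x; rewrite ?(@zofE _ _ B D f hf0 Y b LYb x).1 ?(@zofE _ _ B D f hf0 Y b LYb x).2.
rewrite {}hX {}ha {}hY {}hb.
clear -hf0 hC dz dw.
set q := derive w u (B *m z u) - derive z u (B *m w u).
exists ((f u)^-1 *: q).
rewrite -!scalemxAr !scalerA mulfV // !scale1r.
rewrite /courant /lieb /lieD /dfun /=.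
rewrite !derive_mulmx // /q mulmxBr.
congr (_, _).
rewrite mulmxBr; apply: rearr.
apply/matrixP => i j; rewrite (ord1 j) !mxE.
rewrite !derive_mulmx //.
have -> : (fun w0 : 'cV_m => dotv (D^T *m z w0) (B *m w w0) - dotv (D^T *m w w0) (B *m z w0))
  = (fun w0 : 'cV_m => dotv (D^T *m z w0) (B *m w w0)) - (fun w0 => dotv (D^T *m w w0) (B *m z w0)) by [].
rewrite deriveB; try by apply: derivable_dotv; apply: derivable_mulmx.
rewrite !derive_dotv; try by apply: derivable_mulmx.
rewrite !derive_mulmx //.
rewrite (@omega_anti _ _ B D (derive z u (evec R i)) (w u) hC).
rewrite (@omega_anti _ _ B D (derive w u (evec R i)) (z u) hC).
move: (dotv _ (B *m derive z u _)) (dotv _ (B *m derive w u _)) => p1 p2.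
by field.
Qed.

Theorem lemma4p4 (R : realType) (m : nat) (B D : 'M[R]_m)
    (f : 'cV[R]_m -> R) (hf : smooth f) (hf0 : forall u, f u != 0) :
  (big_isotropic_structure (LBD f B D) <-> D *m B + B^T *m D^T = 0) /\
  (dirac_structure (LBD f B D) <->
     D *m B + B^T *m D^T = 0 /\
     (forall z : 'cV[R]_m, B *m z = 0 -> D^T *m z = 0 -> z = 0)).
Proof.
split; split.
- by move=> [iso _]; exact: (@iso_fwd _ _ B D f hf0 iso).
- move=> hC; split; first exact: iso_bwd.
  exact: (@closure _ _ B D f hf0 hC).
- move=> [eqL _].
  have hC : D *m B + B^T *m D^T = 0.
    by apply: (@iso_fwd _ _ B D f hf0) => u; rewrite -eqL.
  by split => //; exact: (@dirac_fwd _ _ B D f hf0 eqL).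
- move=> [hC hinj]; split; first exact: (@dirac_bwd _ _ B D f hf0 hC hinj).
  exact: (@closure _ _ B D f hf0 hC).
Qed.
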